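(* There exist continuous functions $f_1,f_2,f_3,f_4:\mathrm{SO}(3)\to S^3$ such that for every rotation $R\in\mathrm{SO}(3)$, $\mathbf{R}_Q(f_i(R))=R$ for some $i\in\{1,2,3,4\}$.
   Context: $S^3$ is the set of unit quaternions, identifying $w+x\mathbf{i}+y\mathbf{j}+z\mathbf{k}$ with $(w,x,y,z)$. $\mathbf{R}_Q:S^3\to\mathrm{SO}(3)$ is the standard conversion $$\mathbf{R}_Q(w,x,y,z)=\begin{bmatrix}1-2y^2-2z^2 & 2(xy-zw) & 2(xz+yw)\\ 2(xy+zw) & 1-2x^2-2z^2 & 2(yz-xw)\\ 2(xz-yw) & 2(yz+xw) & 1-2x^2-2y^2\end{bmatrix}.$$ *)

(* Defs.v *)
From HB Require Import structures.
From mathcomp Require Import all_boot all_order all_algebra.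
From mathcomp Require Import all_classical all_reals all_analysis.
Set Implicit Arguments. Unset Strict Implicit. Unset Printing Implicit Defensive.
Import Order.TTheory GRing.Theory Num.Theory.
Local Open Scope classical_set_scope.
Local Open Scope ring_scope.

Definition SO3 (R : realType) : set 'M[R]_3 :=
  [set M | M^T *m M = 1%:M /\ \det M = 1].

(* S^3: unit quaternions w + x i + y j + z k, stored as (w,x,y,z) in 'rV_4. *)
Definition qw (R : realType) (q : 'rV[R]_4) : R := q ord0 (@Ordinal 4 0 isT).
Definition qx (R : realType) (q : 'rV[R]_4) : R := q ord0 (@Ordinal 4 1 isT).
Definition qy (R : realType) (q : 'rV[R]_4) : R := q ord0 (@Ordinal 4 2 isT).
Definition qz (R : realType) (q : 'rV[R]_4) : R := q ord0 (@Ordinal 4 3 isT).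

Definition S3 (R : realType) : set 'rV[R]_4 :=
  [set q | qw q ^+ 2 + qx q ^+ 2 + qy q ^+ 2 + qz q ^+ 2 = 1].

Definition RQ (R : realType) (q : 'rV[R]_4) : 'M[R]_3 :=
  let w := qw q in let x := qx q in let y := qy q in let z := qz q in
  \matrix_(i < 3, j < 3)
    nth 0 (nth [::]
      [:: [:: 1 - 2 * y ^+ 2 - 2 * z ^+ 2; 2 * (x * y - z * w); 2 * (x * z + y * w)];
          [:: 2 * (x * y + z * w); 1 - 2 * x ^+ 2 - 2 * z ^+ 2; 2 * (y * z - x * w)];
          [:: 2 * (x * z - y * w); 2 * (y * z + x * w); 1 - 2 * x ^+ 2 - 2 * y ^+ 2]]
      i) j.

(* Main.v *)
Require Import Defs.
From HB Require Import structures.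
From mathcomp Require Import all_boot all_order all_algebra.
From mathcomp Require Import all_classical all_reals all_analysis.
From mathcomp Require Import ring lra.
Import Order.TTheory GRing.Theory Num.Theory numFieldNormedType.Exports.
Local Open Scope classical_set_scope.
Local Open Scope ring_scope.

Definition mkq {R : realType} (a b c d : R) : 'rV[R]_4 :=
  (Num.sqrt (a^+2 + b^+2 + c^+2 + d^+2))^-1  *: \row_(j < 4) nth 0 [:: a; b; c; d] j.

Definition mat9 {R : realType} (m00 m01 m02 m10 m11 m12 m20 m21 m22 : R) : 'M[R]_3 :=
  \matrix_(i < 3, j < 3) nth 0 (nth [::] [:: [:: m00; m01; m02]; [:: m10; m11; m12]; [:: m20; m21; m22]] i) j.

Section Q.
Variable R : realType.
Implicit Types a b c d : R.
Let t a b c d : R := (Num.sqrt (a^+2 + b^+2 + c^+2 + d^+2))^-1.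
Lemma qw_mkq a b c d : qw (mkq a b c d) = t a b c d  *  a.
Proof. by rewrite /qw /mkq !mxE. Qed.
Lemma qx_mkq a b c d : qx (mkq a b c d) = t a b c d  *  b.
Proof. by rewrite /qx /mkq !mxE. Qed.
Lemma qy_mkq a b c d : qy (mkq a b c d) = t a b c d  *  c.
Proof. by rewrite /qy /mkq !mxE. Qed.
Lemma qz_mkq a b c d : qz (mkq a b c d) = t a b c d  *  d.
Proof. by rewrite /qz /mkq !mxE. Qed.

Lemma t2 a b c d : 0 < a^+2 + b^+2 + c^+2 + d^+2 ->
  t a b c d ^+2 = (a^+2 + b^+2 + c^+2 + d^+2)^-1.
Proof. by move=> h; rewrite /t exprVn sqr_sqrtr // ltW. Qed.

Lemma mkq_S3 a b c d : 0 < a^+2 + b^+2 + c^+2 + d^+2 -> S3 (mkq a b c d).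
Proof.
move=> h; rewrite /S3 /= qw_mkq qx_mkq qy_mkq qz_mkq !exprMn t2 //.
rewrite -!mulrDr mulVf //; exact: lt0r_neq0.
Qed.

Lemma trick (tt k L X m dd : R) : 4 * k * tt^+2 = 1 -> L = 4 * k * m ->
  X - m = tt^+2 * (L - 4 * k * m) + (1-4 * k * tt^+2) * (dd-m) -> X = m.
Proof.
move=> h1 h2 h3; apply/eqP; rewrite -subr_eq0 h3 h2 h1 !subrr mulr0 mul0r addr0 //.
Qed.

Lemma RQ_mkq a b c d (k m00 m01 m02 m10 m11 m12 m20 m21 m22 : R) :
  a^+2 + b^+2 + c^+2 + d^+2 = 4 * k -> 0 < k ->
  4 * k - 2 * c^+2 - 2 * d^+2 = 4 * k * m00 ->
  2 * (b * c - d * a) = 4 * k * m01 ->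
  2 * (b * d + c * a) = 4 * k * m02 ->
  2 * (b * c + d * a) = 4 * k * m10 ->
  4 * k - 2 * b^+2 - 2 * d^+2 = 4 * k * m11 ->
  2 * (c * d - b * a) = 4 * k * m12 ->
  2 * (b * d - c * a) = 4 * k * m20 ->
  2 * (c * d + b * a) = 4 * k * m21 ->
  4 * k - 2 * b^+2 - 2 * c^+2 = 4 * k * m22 ->
  RQ (mkq a b c d) = mat9 m00 m01 m02 m10 m11 m12 m20 m21 m22.
Proof.
move=> hn hk e00 e01 e02 e10 e11 e12 e20 e21 e22.
have hN : 0 < a^+2 + b^+2 + c^+2 + d^+2 by rewrite hn mulr_gt0.
have h4 : 4 * k * (t a b c d)^+2 = 1.
  rewrite t2 // hn mulfV //; apply: lt0r_neq0; rewrite mulr_gt0 //.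
rewrite /RQ qw_mkq qx_mkq qy_mkq qz_mkq; apply/matrixP => i j; rewrite !mxE.
case: i => [[|[|[|//]]] ?]; case: j => [[|[|[|//]]] ?] /=.
- by apply: (@trick _ _ _ _ _ 1 h4 e00); ring.
- by apply: (@trick _ _ _ _ _ 0 h4 e01); ring.
- by apply: (@trick _ _ _ _ _ 0 h4 e02); ring.
- by apply: (@trick _ _ _ _ _ 0 h4 e10); ring.
- by apply: (@trick _ _ _ _ _ 1 h4 e11); ring.
- by apply: (@trick _ _ _ _ _ 0 h4 e12); ring.
- by apply: (@trick _ _ _ _ _ 0 h4 e20); ring.
- by apply: (@trick _ _ _ _ _ 0 h4 e21); ring.
- by apply: (@trick _ _ _ _ _ 1 h4 e22); ring.
Qed.
End Q.
Arguments RQ_mkq {R a b c d k m00 m01 m02 m10 m11 m12 m20 m21 m22}.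
Lemma branch_w (R : realType) (m00 m01 m02 m10 m11 m12 m20 m21 m22 : R) (O00 : m00 * m00 + m10 * m10 + m20 * m20 - 1 = 0) (O01 : m00 * m01 + m10 * m11 + m20 * m21 = 0) (O02 : m00 * m02 + m10 * m12 + m20 * m22 = 0) (O11 : m01 * m01 + m11 * m11 + m21 * m21 - 1 = 0) (O12 : m01 * m02 + m11 * m12 + m21 * m22 = 0) (O22 : m02 * m02 + m12 * m12 + m22 * m22 - 1 = 0) (C00 : m00 - (m11 * m22 - m12 * m21) = 0) (C01 : m01 + (m10 * m22 - m12 * m20) = 0) (C02 : m02 - (m10 * m21 - m11 * m20) = 0) (C10 : m10 + (m01 * m22 - m02 * m21) = 0) (C11 : m11 - (m00 * m22 - m02 * m20) = 0) (C12 : m12 + (m00 * m21 - m01 * m20) = 0) (C20 : m20 - (m01 * m12 - m02 * m11) = 0) (C21 : m21 + (m00 * m12 - m02 * m10) = 0) (C22 : m22 - (m00 * m11 - m01 * m10) = 0) :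
  1 <= (1 + m00 + m11 + m22) -> RQ (mkq (1 + m00 + m11 + m22) (m21 - m12) (m02 - m20) (m10 - m01)) = mat9 m00 m01 m02 m10 m11 m12 m20 m21 m22.
Proof.
move=> hk.
have hn : (1 + m00 + m11 + m22)^+2 + (m21 - m12)^+2 + (m02 - m20)^+2 + (m10 - m01)^+2 = 4 * (1 + m00 + m11 + m22).
  apply/eqP; rewrite -subr_eq0; apply/eqP.
  transitivity ((1)  *  (m00 * m00 + m10 * m10 + m20 * m20 - 1) + (1 + 2 * m22)  *  (m01 * m01 + m11 * m11 + m21 * m21 - 1) + (- 2 * m21)  *  (m01 * m02 + m11 * m12 + m21 * m22) + (1)  *  (m02 * m02 + m12 * m12 + m22 * m22 - 1) + (- 2 + 2 * m11)  *  (m00 - (m11 * m22 - m12 * m21)) + (- 2 * m01)  *  (m10 + (m01 * m22 - m02 * m21)) + (- 2)  *  (m11 - (m00 * m22 - m02 * m20))); first ring.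
  by rewrite O00 O11 O12 O22 C00 C10 C11; ring.
have e00 : 4 * (1 + m00 + m11 + m22) - 2 * (m02 - m20)^+2 - 2 * (m10 - m01)^+2 = 4 * (1 + m00 + m11 + m22) * m00.
  apply/eqP; rewrite -subr_eq0; apply/eqP.
  transitivity ((- 4)  *  (m00 * m00 + m10 * m10 + m20 * m20 - 1) + (- 4 * m22)  *  (m01 * m01 + m11 * m11 + m21 * m21 - 1) + (4 * m21)  *  (m01 * m02 + m11 * m12 + m21 * m22) + (- 4 * m11)  *  (m00 - (m11 * m22 - m12 * m21)) + (- 2 * m01)  *  (m01 + (m10 * m22 - m12 * m20)) + (- 2 * m02)  *  (m02 - (m10 * m21 - m11 * m20)) + (2 * m10 + 4 * m01)  *  (m10 + (m01 * m22 - m02 * m21)) + (4)  *  (m11 - (m00 * m22 - m02 * m20)) + (2 * m20)  *  (m20 - (m01 * m12 - m02 * m11))); first ring.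
  by rewrite O00 O11 O12 C00 C01 C02 C10 C11 C20; ring.
have e01 : 2 * ((m21 - m12) * (m02 - m20) - (m10 - m01) * (1 + m00 + m11 + m22)) = 4 * (1 + m00 + m11 + m22) * m01.
  apply/eqP; rewrite -subr_eq0; apply/eqP.
  transitivity ((- 2)  *  (m00 * m01 + m10 * m11 + m20 * m21) + (- 2 * m10)  *  (m00 - (m11 * m22 - m12 * m21)) + (- 2 - 2 * m11)  *  (m01 + (m10 * m22 - m12 * m20)) + (- 2 * m12)  *  (m02 - (m10 * m21 - m11 * m20)) + (- 2)  *  (m10 + (m01 * m22 - m02 * m21))); first ring.
  by rewrite O01 C00 C01 C02 C10; ring.
have e02 : 2 * ((m21 - m12) * (m10 - m01) + (m02 - m20) * (1 + m00 + m11 + m22)) = 4 * (1 + m00 + m11 + m22) * m02.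
  apply/eqP; rewrite -subr_eq0; apply/eqP.
  transitivity ((- 2 - 2 * m22)  *  (m00 * m02 + m10 * m12 + m20 * m22) + (2 * m20)  *  (m02 * m02 + m12 * m12 + m22 * m22 - 1) + (- 2 * m20)  *  (m00 - (m11 * m22 - m12 * m21)) + (- 2 * m21 + 2 * m12)  *  (m01 + (m10 * m22 - m12 * m20)) + (- 2 - 2 * m22)  *  (m02 - (m10 * m21 - m11 * m20)) + (- 2 * m02)  *  (m11 - (m00 * m22 - m02 * m20))); first ring.
  by rewrite O02 O22 C00 C01 C02 C11; ring.
have e10 : 2 * ((m21 - m12) * (m02 - m20) + (m10 - m01) * (1 + m00 + m11 + m22)) = 4 * (1 + m00 + m11 + m22) * m10.
  apply/eqP; rewrite -subr_eq0; apply/eqP.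
  transitivity ((- 2)  *  (m00 * m01 + m10 * m11 + m20 * m21) + (- 2 * m10)  *  (m00 - (m11 * m22 - m12 * m21)) + (- 2 - 2 * m11)  *  (m01 + (m10 * m22 - m12 * m20)) + (- 2 * m12)  *  (m02 - (m10 * m21 - m11 * m20)) + (- 2)  *  (m10 + (m01 * m22 - m02 * m21))); first ring.
  by rewrite O01 C00 C01 C02 C10; ring.
have e11 : 4 * (1 + m00 + m11 + m22) - 2 * (m21 - m12)^+2 - 2 * (m10 - m01)^+2 = 4 * (1 + m00 + m11 + m22) * m11.
  apply/eqP; rewrite -subr_eq0; apply/eqP.
  transitivity ((- 2)  *  (m00 * m00 + m10 * m10 + m20 * m20 - 1) + (- 2 - 4 * m22)  *  (m01 * m01 + m11 * m11 + m21 * m21 - 1) + (4 * m21)  *  (m01 * m02 + m11 * m12 + m21 * m22) + (4 - 4 * m11 + 2 * m00)  *  (m00 - (m11 * m22 - m12 * m21)) + (4 * m01)  *  (m10 + (m01 * m22 - m02 * m21)) + (- 2 * m11)  *  (m11 - (m00 * m22 - m02 * m20)) + (- 2 * m12)  *  (m12 + (m00 * m21 - m01 * m20)) + (2 * m20)  *  (m20 - (m01 * m12 - m02 * m11))); first ring.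
  by rewrite O00 O11 O12 C00 C10 C11 C12 C20; ring.
have e12 : 2 * ((m02 - m20) * (m10 - m01) - (m21 - m12) * (1 + m00 + m11 + m22)) = 4 * (1 + m00 + m11 + m22) * m12.
  apply/eqP; rewrite -subr_eq0; apply/eqP.
  transitivity ((- 2 - 2 * m22)  *  (m01 * m02 + m11 * m12 + m21 * m22) + (2 * m21)  *  (m02 * m02 + m12 * m12 + m22 * m22 - 1) + (- 2 * m12)  *  (m00 - (m11 * m22 - m12 * m21)) + (- 2 * m20 + 2 * m02)  *  (m10 + (m01 * m22 - m02 * m21)) + (- 2 * m21)  *  (m11 - (m00 * m22 - m02 * m20)) + (- 2 - 2 * m22)  *  (m12 + (m00 * m21 - m01 * m20))); first ring.
  by rewrite O12 O22 C00 C10 C11 C12; ring.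
have e20 : 2 * ((m21 - m12) * (m10 - m01) - (m02 - m20) * (1 + m00 + m11 + m22)) = 4 * (1 + m00 + m11 + m22) * m20.
  apply/eqP; rewrite -subr_eq0; apply/eqP.
  transitivity ((- 2 - 2 * m22)  *  (m00 * m02 + m10 * m12 + m20 * m22) + (2 * m20)  *  (m02 * m02 + m12 * m12 + m22 * m22 - 1) + (- 2 * m20)  *  (m00 - (m11 * m22 - m12 * m21)) + (- 2 * m21 + 2 * m12)  *  (m01 + (m10 * m22 - m12 * m20)) + (- 2 - 2 * m22)  *  (m02 - (m10 * m21 - m11 * m20)) + (- 2 * m02)  *  (m11 - (m00 * m22 - m02 * m20))); first ring.
  by rewrite O02 O22 C00 C01 C02 C11; ring.
have e21 : 2 * ((m02 - m20) * (m10 - m01) + (m21 - m12) * (1 + m00 + m11 + m22)) = 4 * (1 + m00 + m11 + m22) * m21.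
  apply/eqP; rewrite -subr_eq0; apply/eqP.
  transitivity ((- 2 - 2 * m22)  *  (m01 * m02 + m11 * m12 + m21 * m22) + (2 * m21)  *  (m02 * m02 + m12 * m12 + m22 * m22 - 1) + (- 2 * m12)  *  (m00 - (m11 * m22 - m12 * m21)) + (- 2 * m20 + 2 * m02)  *  (m10 + (m01 * m22 - m02 * m21)) + (- 2 * m21)  *  (m11 - (m00 * m22 - m02 * m20)) + (- 2 - 2 * m22)  *  (m12 + (m00 * m21 - m01 * m20))); first ring.
  by rewrite O12 O22 C00 C10 C11 C12; ring.
have e22 : 4 * (1 + m00 + m11 + m22) - 2 * (m21 - m12)^+2 - 2 * (m02 - m20)^+2 = 4 * (1 + m00 + m11 + m22) * m22.
  apply/eqP; rewrite -subr_eq0; apply/eqP.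
  transitivity ((2)  *  (m00 * m00 + m10 * m10 + m20 * m20 - 1) + (- 2)  *  (m01 * m01 + m11 * m11 + m21 * m21 - 1) + (- 4)  *  (m02 * m02 + m12 * m12 + m22 * m22 - 1) + (4 - 2 * m00)  *  (m00 - (m11 * m22 - m12 * m21)) + (2 * m01)  *  (m01 + (m10 * m22 - m12 * m20)) + (2 * m02)  *  (m02 - (m10 * m21 - m11 * m20)) + (- 2 * m10)  *  (m10 + (m01 * m22 - m02 * m21)) + (4 + 2 * m11)  *  (m11 - (m00 * m22 - m02 * m20)) + (2 * m12)  *  (m12 + (m00 * m21 - m01 * m20)) + (- 4 * m20)  *  (m20 - (m01 * m12 - m02 * m11))); first ring.
  by rewrite O00 O11 O22 C00 C01 C02 C10 C11 C12 C20; ring.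
have hk0 : 0 < (1 + m00 + m11 + m22) by apply: lt_le_trans hk; exact: ltr01.
exact: (RQ_mkq hn hk0 e00 e01 e02 e10 e11 e12 e20 e21 e22).
Qed.

Lemma branch_x (R : realType) (m00 m01 m02 m10 m11 m12 m20 m21 m22 : R) (O00 : m00 * m00 + m10 * m10 + m20 * m20 - 1 = 0) (O01 : m00 * m01 + m10 * m11 + m20 * m21 = 0) (O02 : m00 * m02 + m10 * m12 + m20 * m22 = 0) (O11 : m01 * m01 + m11 * m11 + m21 * m21 - 1 = 0) (O12 : m01 * m02 + m11 * m12 + m21 * m22 = 0) (O22 : m02 * m02 + m12 * m12 + m22 * m22 - 1 = 0) (C00 : m00 - (m11 * m22 - m12 * m21) = 0) (C01 : m01 + (m10 * m22 - m12 * m20) = 0) (C02 : m02 - (m10 * m21 - m11 * m20) = 0) (C10 : m10 + (m01 * m22 - m02 * m21) = 0) (C11 : m11 - (m00 * m22 - m02 * m20) = 0) (C12 : m12 + (m00 * m21 - m01 * m20) = 0) (C20 : m20 - (m01 * m12 - m02 * m11) = 0) (C21 : m21 + (m00 * m12 - m02 * m10) = 0) (C22 : m22 - (m00 * m11 - m01 * m10) = 0) :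
  1 <= (1 + m00 - m11 - m22) -> RQ (mkq (m21 - m12) (1 + m00 - m11 - m22) (m01 + m10) (m02 + m20)) = mat9 m00 m01 m02 m10 m11 m12 m20 m21 m22.
Proof.
move=> hk.
have hn : (m21 - m12)^+2 + (1 + m00 - m11 - m22)^+2 + (m01 + m10)^+2 + (m02 + m20)^+2 = 4 * (1 + m00 - m11 - m22).
  apply/eqP; rewrite -subr_eq0; apply/eqP.
  transitivity ((1)  *  (m00 * m00 + m10 * m10 + m20 * m20 - 1) + (1 - 2 * m22)  *  (m01 * m01 + m11 * m11 + m21 * m21 - 1) + (2 * m21)  *  (m01 * m02 + m11 * m12 + m21 * m22) + (1)  *  (m02 * m02 + m12 * m12 + m22 * m22 - 1) + (- 2 - 2 * m11)  *  (m00 - (m11 * m22 - m12 * m21)) + (2 * m01)  *  (m10 + (m01 * m22 - m02 * m21)) + (2)  *  (m11 - (m00 * m22 - m02 * m20))); first ring.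
  by rewrite O00 O11 O12 O22 C00 C10 C11; ring.
have e00 : 4 * (1 + m00 - m11 - m22) - 2 * (m01 + m10)^+2 - 2 * (m02 + m20)^+2 = 4 * (1 + m00 - m11 - m22) * m00.
  apply/eqP; rewrite -subr_eq0; apply/eqP.
  transitivity ((- 4)  *  (m00 * m00 + m10 * m10 + m20 * m20 - 1) + (4 * m22)  *  (m01 * m01 + m11 * m11 + m21 * m21 - 1) + (- 4 * m21)  *  (m01 * m02 + m11 * m12 + m21 * m22) + (4 * m11)  *  (m00 - (m11 * m22 - m12 * m21)) + (- 2 * m01)  *  (m01 + (m10 * m22 - m12 * m20)) + (- 2 * m02)  *  (m02 - (m10 * m21 - m11 * m20)) + (2 * m10 - 4 * m01)  *  (m10 + (m01 * m22 - m02 * m21)) + (- 4)  *  (m11 - (m00 * m22 - m02 * m20)) + (2 * m20)  *  (m20 - (m01 * m12 - m02 * m11))); first ring.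
  by rewrite O00 O11 O12 C00 C01 C02 C10 C11 C20; ring.
have e01 : 2 * ((1 + m00 - m11 - m22) * (m01 + m10) - (m02 + m20) * (m21 - m12)) = 4 * (1 + m00 - m11 - m22) * m01.
  apply/eqP; rewrite -subr_eq0; apply/eqP.
  transitivity ((- 2)  *  (m00 * m01 + m10 * m11 + m20 * m21) + (2 * m10)  *  (m00 - (m11 * m22 - m12 * m21)) + (- 2 + 2 * m11)  *  (m01 + (m10 * m22 - m12 * m20)) + (2 * m12)  *  (m02 - (m10 * m21 - m11 * m20)) + (2)  *  (m10 + (m01 * m22 - m02 * m21))); first ring.
  by rewrite O01 C00 C01 C02 C10; ring.
have e02 : 2 * ((1 + m00 - m11 - m22) * (m02 + m20) + (m01 + m10) * (m21 - m12)) = 4 * (1 + m00 - m11 - m22) * m02.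
  apply/eqP; rewrite -subr_eq0; apply/eqP.
  transitivity ((- 2 + 2 * m22)  *  (m00 * m02 + m10 * m12 + m20 * m22) + (- 2 * m20)  *  (m02 * m02 + m12 * m12 + m22 * m22 - 1) + (2 * m20)  *  (m00 - (m11 * m22 - m12 * m21)) + (2 * m21 - 2 * m12)  *  (m01 + (m10 * m22 - m12 * m20)) + (- 2 + 2 * m22)  *  (m02 - (m10 * m21 - m11 * m20)) + (2 * m02)  *  (m11 - (m00 * m22 - m02 * m20))); first ring.
  by rewrite O02 O22 C00 C01 C02 C11; ring.
have e10 : 2 * ((1 + m00 - m11 - m22) * (m01 + m10) + (m02 + m20) * (m21 - m12)) = 4 * (1 + m00 - m11 - m22) * m10.
  apply/eqP; rewrite -subr_eq0; apply/eqP.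
  transitivity ((2)  *  (m00 * m01 + m10 * m11 + m20 * m21) + (- 2 * m10)  *  (m00 - (m11 * m22 - m12 * m21)) + (2 - 2 * m11)  *  (m01 + (m10 * m22 - m12 * m20)) + (- 2 * m12)  *  (m02 - (m10 * m21 - m11 * m20)) + (- 2)  *  (m10 + (m01 * m22 - m02 * m21))); first ring.
  by rewrite O01 C00 C01 C02 C10; ring.
have e11 : 4 * (1 + m00 - m11 - m22) - 2 * (1 + m00 - m11 - m22)^+2 - 2 * (m02 + m20)^+2 = 4 * (1 + m00 - m11 - m22) * m11.
  apply/eqP; rewrite -subr_eq0; apply/eqP.
  transitivity ((- 2)  *  (m02 * m02 + m12 * m12 + m22 * m22 - 1) + (- 2 * m00)  *  (m00 - (m11 * m22 - m12 * m21)) + (- 4 + 2 * m11)  *  (m11 - (m00 * m22 - m02 * m20)) + (2 * m12)  *  (m12 + (m00 * m21 - m01 * m20)) + (- 2 * m20)  *  (m20 - (m01 * m12 - m02 * m11))); first ring.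
  by rewrite O22 C00 C11 C12 C20; ring.
have e12 : 2 * ((m01 + m10) * (m02 + m20) - (1 + m00 - m11 - m22) * (m21 - m12)) = 4 * (1 + m00 - m11 - m22) * m12.
  apply/eqP; rewrite -subr_eq0; apply/eqP.
  transitivity ((2 - 2 * m22)  *  (m01 * m02 + m11 * m12 + m21 * m22) + (2 * m21)  *  (m02 * m02 + m12 * m12 + m22 * m22 - 1) + (- 2 * m12)  *  (m00 - (m11 * m22 - m12 * m21)) + (2 * m20 + 2 * m02)  *  (m10 + (m01 * m22 - m02 * m21)) + (2 * m21)  *  (m11 - (m00 * m22 - m02 * m20)) + (- 2 + 2 * m22)  *  (m12 + (m00 * m21 - m01 * m20))); first ring.
  by rewrite O12 O22 C00 C10 C11 C12; ring.
have e20 : 2 * ((1 + m00 - m11 - m22) * (m02 + m20) - (m01 + m10) * (m21 - m12)) = 4 * (1 + m00 - m11 - m22) * m20.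
  apply/eqP; rewrite -subr_eq0; apply/eqP.
  transitivity ((2 - 2 * m22)  *  (m00 * m02 + m10 * m12 + m20 * m22) + (2 * m20)  *  (m02 * m02 + m12 * m12 + m22 * m22 - 1) + (- 2 * m20)  *  (m00 - (m11 * m22 - m12 * m21)) + (- 2 * m21 + 2 * m12)  *  (m01 + (m10 * m22 - m12 * m20)) + (2 - 2 * m22)  *  (m02 - (m10 * m21 - m11 * m20)) + (- 2 * m02)  *  (m11 - (m00 * m22 - m02 * m20))); first ring.
  by rewrite O02 O22 C00 C01 C02 C11; ring.
have e21 : 2 * ((m01 + m10) * (m02 + m20) + (1 + m00 - m11 - m22) * (m21 - m12)) = 4 * (1 + m00 - m11 - m22) * m21.
  apply/eqP; rewrite -subr_eq0; apply/eqP.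
  transitivity ((2 - 2 * m22)  *  (m01 * m02 + m11 * m12 + m21 * m22) + (2 * m21)  *  (m02 * m02 + m12 * m12 + m22 * m22 - 1) + (- 2 * m12)  *  (m00 - (m11 * m22 - m12 * m21)) + (2 * m20 + 2 * m02)  *  (m10 + (m01 * m22 - m02 * m21)) + (2 * m21)  *  (m11 - (m00 * m22 - m02 * m20)) + (- 2 + 2 * m22)  *  (m12 + (m00 * m21 - m01 * m20))); first ring.
  by rewrite O12 O22 C00 C10 C11 C12; ring.
have e22 : 4 * (1 + m00 - m11 - m22) - 2 * (1 + m00 - m11 - m22)^+2 - 2 * (m01 + m10)^+2 = 4 * (1 + m00 - m11 - m22) * m22.
  apply/eqP; rewrite -subr_eq0; apply/eqP.
  transitivity ((- 4)  *  (m00 * m00 + m10 * m10 + m20 * m20 - 1) + (4 * m22)  *  (m01 * m01 + m11 * m11 + m21 * m21 - 1) + (- 4 * m21)  *  (m01 * m02 + m11 * m12 + m21 * m22) + (2)  *  (m02 * m02 + m12 * m12 + m22 * m22 - 1) + (4 * m11 + 2 * m00)  *  (m00 - (m11 * m22 - m12 * m21)) + (- 2 * m01)  *  (m01 + (m10 * m22 - m12 * m20)) + (- 2 * m02)  *  (m02 - (m10 * m21 - m11 * m20)) + (2 * m10 - 4 * m01)  *  (m10 + (m01 * m22 - m02 * m21)) + (- 2 * m11)  *  (m11 - (m00 * m22 - m02 * m20)) + (- 2 * m12)  *  (m12 + (m00 * m21 - m01 * m20)) + (4 * m20)  *  (m20 - (m01 * m12 - m02 * m11))); first ring.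
  by rewrite O00 O11 O12 O22 C00 C01 C02 C10 C11 C12 C20; ring.
have hk0 : 0 < (1 + m00 - m11 - m22) by apply: lt_le_trans hk; exact: ltr01.
exact: (RQ_mkq hn hk0 e00 e01 e02 e10 e11 e12 e20 e21 e22).
Qed.

Lemma branch_y (R : realType) (m00 m01 m02 m10 m11 m12 m20 m21 m22 : R) (O00 : m00 * m00 + m10 * m10 + m20 * m20 - 1 = 0) (O01 : m00 * m01 + m10 * m11 + m20 * m21 = 0) (O02 : m00 * m02 + m10 * m12 + m20 * m22 = 0) (O11 : m01 * m01 + m11 * m11 + m21 * m21 - 1 = 0) (O12 : m01 * m02 + m11 * m12 + m21 * m22 = 0) (O22 : m02 * m02 + m12 * m12 + m22 * m22 - 1 = 0) (C00 : m00 - (m11 * m22 - m12 * m21) = 0) (C01 : m01 + (m10 * m22 - m12 * m20) = 0) (C02 : m02 - (m10 * m21 - m11 * m20) = 0) (C10 : m10 + (m01 * m22 - m02 * m21) = 0) (C11 : m11 - (m00 * m22 - m02 * m20) = 0) (C12 : m12 + (m00 * m21 - m01 * m20) = 0) (C20 : m20 - (m01 * m12 - m02 * m11) = 0) (C21 : m21 + (m00 * m12 - m02 * m10) = 0) (C22 : m22 - (m00 * m11 - m01 * m10) = 0) :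
  1 <= (1 - m00 + m11 - m22) -> RQ (mkq (m02 - m20) (m01 + m10) (1 - m00 + m11 - m22) (m12 + m21)) = mat9 m00 m01 m02 m10 m11 m12 m20 m21 m22.
Proof.
move=> hk.
have hn : (m02 - m20)^+2 + (m01 + m10)^+2 + (1 - m00 + m11 - m22)^+2 + (m12 + m21)^+2 = 4 * (1 - m00 + m11 - m22).
  apply/eqP; rewrite -subr_eq0; apply/eqP.
  transitivity ((1)  *  (m00 * m00 + m10 * m10 + m20 * m20 - 1) + (1 - 2 * m22)  *  (m01 * m01 + m11 * m11 + m21 * m21 - 1) + (2 * m21)  *  (m01 * m02 + m11 * m12 + m21 * m22) + (1)  *  (m02 * m02 + m12 * m12 + m22 * m22 - 1) + (2 - 2 * m11)  *  (m00 - (m11 * m22 - m12 * m21)) + (2 * m01)  *  (m10 + (m01 * m22 - m02 * m21)) + (- 2)  *  (m11 - (m00 * m22 - m02 * m20))); first ring.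
  by rewrite O00 O11 O12 O22 C00 C10 C11; ring.
have e00 : 4 * (1 - m00 + m11 - m22) - 2 * (1 - m00 + m11 - m22)^+2 - 2 * (m12 + m21)^+2 = 4 * (1 - m00 + m11 - m22) * m00.
  apply/eqP; rewrite -subr_eq0; apply/eqP.
  transitivity ((2)  *  (m00 * m00 + m10 * m10 + m20 * m20 - 1) + (- 2)  *  (m01 * m01 + m11 * m11 + m21 * m21 - 1) + (- 2)  *  (m02 * m02 + m12 * m12 + m22 * m22 - 1) + (- 4)  *  (m00 - (m11 * m22 - m12 * m21)) + (2 * m01)  *  (m01 + (m10 * m22 - m12 * m20)) + (2 * m02)  *  (m02 - (m10 * m21 - m11 * m20)) + (- 2 * m10)  *  (m10 + (m01 * m22 - m02 * m21)) + (- 2 * m20)  *  (m20 - (m01 * m12 - m02 * m11))); first ring.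
  by rewrite O00 O11 O22 C00 C01 C02 C10 C20; ring.
have e01 : 2 * ((m01 + m10) * (1 - m00 + m11 - m22) - (m12 + m21) * (m02 - m20)) = 4 * (1 - m00 + m11 - m22) * m01.
  apply/eqP; rewrite -subr_eq0; apply/eqP.
  transitivity ((2)  *  (m00 * m01 + m10 * m11 + m20 * m21) + (- 2 * m10)  *  (m00 - (m11 * m22 - m12 * m21)) + (- 2 - 2 * m11)  *  (m01 + (m10 * m22 - m12 * m20)) + (- 2 * m12)  *  (m02 - (m10 * m21 - m11 * m20)) + (2)  *  (m10 + (m01 * m22 - m02 * m21))); first ring.
  by rewrite O01 C00 C01 C02 C10; ring.
have e02 : 2 * ((m01 + m10) * (m12 + m21) + (1 - m00 + m11 - m22) * (m02 - m20)) = 4 * (1 - m00 + m11 - m22) * m02.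
  apply/eqP; rewrite -subr_eq0; apply/eqP.
  transitivity ((2 - 2 * m22)  *  (m00 * m02 + m10 * m12 + m20 * m22) + (2 * m20)  *  (m02 * m02 + m12 * m12 + m22 * m22 - 1) + (2 * m20)  *  (m00 - (m11 * m22 - m12 * m21)) + (2 * m21 + 2 * m12)  *  (m01 + (m10 * m22 - m12 * m20)) + (- 2 + 2 * m22)  *  (m02 - (m10 * m21 - m11 * m20)) + (- 2 * m02)  *  (m11 - (m00 * m22 - m02 * m20))); first ring.
  by rewrite O02 O22 C00 C01 C02 C11; ring.
have e10 : 2 * ((m01 + m10) * (1 - m00 + m11 - m22) + (m12 + m21) * (m02 - m20)) = 4 * (1 - m00 + m11 - m22) * m10.
  apply/eqP; rewrite -subr_eq0; apply/eqP.
  transitivity ((- 2)  *  (m00 * m01 + m10 * m11 + m20 * m21) + (2 * m10)  *  (m00 - (m11 * m22 - m12 * m21)) + (2 + 2 * m11)  *  (m01 + (m10 * m22 - m12 * m20)) + (2 * m12)  *  (m02 - (m10 * m21 - m11 * m20)) + (- 2)  *  (m10 + (m01 * m22 - m02 * m21))); first ring.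
  by rewrite O01 C00 C01 C02 C10; ring.
have e11 : 4 * (1 - m00 + m11 - m22) - 2 * (m01 + m10)^+2 - 2 * (m12 + m21)^+2 = 4 * (1 - m00 + m11 - m22) * m11.
  apply/eqP; rewrite -subr_eq0; apply/eqP.
  transitivity ((- 2)  *  (m00 * m00 + m10 * m10 + m20 * m20 - 1) + (- 2 + 4 * m22)  *  (m01 * m01 + m11 * m11 + m21 * m21 - 1) + (- 4 * m21)  *  (m01 * m02 + m11 * m12 + m21 * m22) + (- 4 + 4 * m11 + 2 * m00)  *  (m00 - (m11 * m22 - m12 * m21)) + (- 4 * m01)  *  (m10 + (m01 * m22 - m02 * m21)) + (- 2 * m11)  *  (m11 - (m00 * m22 - m02 * m20)) + (- 2 * m12)  *  (m12 + (m00 * m21 - m01 * m20)) + (2 * m20)  *  (m20 - (m01 * m12 - m02 * m11))); first ring.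
  by rewrite O00 O11 O12 C00 C10 C11 C12 C20; ring.
have e12 : 2 * ((1 - m00 + m11 - m22) * (m12 + m21) - (m01 + m10) * (m02 - m20)) = 4 * (1 - m00 + m11 - m22) * m12.
  apply/eqP; rewrite -subr_eq0; apply/eqP.
  transitivity ((- 2 + 2 * m22)  *  (m01 * m02 + m11 * m12 + m21 * m22) + (- 2 * m21)  *  (m02 * m02 + m12 * m12 + m22 * m22 - 1) + (2 * m12)  *  (m00 - (m11 * m22 - m12 * m21)) + (2 * m20 - 2 * m02)  *  (m10 + (m01 * m22 - m02 * m21)) + (2 * m21)  *  (m11 - (m00 * m22 - m02 * m20)) + (- 2 + 2 * m22)  *  (m12 + (m00 * m21 - m01 * m20))); first ring.
  by rewrite O12 O22 C00 C10 C11 C12; ring.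
have e20 : 2 * ((m01 + m10) * (m12 + m21) - (1 - m00 + m11 - m22) * (m02 - m20)) = 4 * (1 - m00 + m11 - m22) * m20.
  apply/eqP; rewrite -subr_eq0; apply/eqP.
  transitivity ((2 - 2 * m22)  *  (m00 * m02 + m10 * m12 + m20 * m22) + (2 * m20)  *  (m02 * m02 + m12 * m12 + m22 * m22 - 1) + (2 * m20)  *  (m00 - (m11 * m22 - m12 * m21)) + (2 * m21 + 2 * m12)  *  (m01 + (m10 * m22 - m12 * m20)) + (- 2 + 2 * m22)  *  (m02 - (m10 * m21 - m11 * m20)) + (- 2 * m02)  *  (m11 - (m00 * m22 - m02 * m20))); first ring.
  by rewrite O02 O22 C00 C01 C02 C11; ring.
have e21 : 2 * ((1 - m00 + m11 - m22) * (m12 + m21) + (m01 + m10) * (m02 - m20)) = 4 * (1 - m00 + m11 - m22) * m21.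
  apply/eqP; rewrite -subr_eq0; apply/eqP.
  transitivity ((2 - 2 * m22)  *  (m01 * m02 + m11 * m12 + m21 * m22) + (2 * m21)  *  (m02 * m02 + m12 * m12 + m22 * m22 - 1) + (- 2 * m12)  *  (m00 - (m11 * m22 - m12 * m21)) + (- 2 * m20 + 2 * m02)  *  (m10 + (m01 * m22 - m02 * m21)) + (- 2 * m21)  *  (m11 - (m00 * m22 - m02 * m20)) + (2 - 2 * m22)  *  (m12 + (m00 * m21 - m01 * m20))); first ring.
  by rewrite O12 O22 C00 C10 C11 C12; ring.
have e22 : 4 * (1 - m00 + m11 - m22) - 2 * (m01 + m10)^+2 - 2 * (1 - m00 + m11 - m22)^+2 = 4 * (1 - m00 + m11 - m22) * m22.
  apply/eqP; rewrite -subr_eq0; apply/eqP.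
  transitivity ((- 4)  *  (m00 * m00 + m10 * m10 + m20 * m20 - 1) + (4 * m22)  *  (m01 * m01 + m11 * m11 + m21 * m21 - 1) + (- 4 * m21)  *  (m01 * m02 + m11 * m12 + m21 * m22) + (2)  *  (m02 * m02 + m12 * m12 + m22 * m22 - 1) + (4 * m11 + 2 * m00)  *  (m00 - (m11 * m22 - m12 * m21)) + (- 2 * m01)  *  (m01 + (m10 * m22 - m12 * m20)) + (- 2 * m02)  *  (m02 - (m10 * m21 - m11 * m20)) + (2 * m10 - 4 * m01)  *  (m10 + (m01 * m22 - m02 * m21)) + (- 2 * m11)  *  (m11 - (m00 * m22 - m02 * m20)) + (- 2 * m12)  *  (m12 + (m00 * m21 - m01 * m20)) + (4 * m20)  *  (m20 - (m01 * m12 - m02 * m11))); first ring.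
  by rewrite O00 O11 O12 O22 C00 C01 C02 C10 C11 C12 C20; ring.
have hk0 : 0 < (1 - m00 + m11 - m22) by apply: lt_le_trans hk; exact: ltr01.
exact: (RQ_mkq hn hk0 e00 e01 e02 e10 e11 e12 e20 e21 e22).
Qed.

Lemma branch_z (R : realType) (m00 m01 m02 m10 m11 m12 m20 m21 m22 : R) (O00 : m00 * m00 + m10 * m10 + m20 * m20 - 1 = 0) (O01 : m00 * m01 + m10 * m11 + m20 * m21 = 0) (O02 : m00 * m02 + m10 * m12 + m20 * m22 = 0) (O11 : m01 * m01 + m11 * m11 + m21 * m21 - 1 = 0) (O12 : m01 * m02 + m11 * m12 + m21 * m22 = 0) (O22 : m02 * m02 + m12 * m12 + m22 * m22 - 1 = 0) (C00 : m00 - (m11 * m22 - m12 * m21) = 0) (C01 : m01 + (m10 * m22 - m12 * m20) = 0) (C02 : m02 - (m10 * m21 - m11 * m20) = 0) (C10 : m10 + (m01 * m22 - m02 * m21) = 0) (C11 : m11 - (m00 * m22 - m02 * m20) = 0) (C12 : m12 + (m00 * m21 - m01 * m20) = 0) (C20 : m20 - (m01 * m12 - m02 * m11) = 0) (C21 : m21 + (m00 * m12 - m02 * m10) = 0) (C22 : m22 - (m00 * m11 - m01 * m10) = 0) :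
  1 <= (1 - m00 - m11 + m22) -> RQ (mkq (m10 - m01) (m02 + m20) (m12 + m21) (1 - m00 - m11 + m22)) = mat9 m00 m01 m02 m10 m11 m12 m20 m21 m22.
Proof.
move=> hk.
have hn : (m10 - m01)^+2 + (m02 + m20)^+2 + (m12 + m21)^+2 + (1 - m00 - m11 + m22)^+2 = 4 * (1 - m00 - m11 + m22).
  apply/eqP; rewrite -subr_eq0; apply/eqP.
  transitivity ((1)  *  (m00 * m00 + m10 * m10 + m20 * m20 - 1) + (1 + 2 * m22)  *  (m01 * m01 + m11 * m11 + m21 * m21 - 1) + (- 2 * m21)  *  (m01 * m02 + m11 * m12 + m21 * m22) + (1)  *  (m02 * m02 + m12 * m12 + m22 * m22 - 1) + (2 + 2 * m11)  *  (m00 - (m11 * m22 - m12 * m21)) + (- 2 * m01)  *  (m10 + (m01 * m22 - m02 * m21)) + (2)  *  (m11 - (m00 * m22 - m02 * m20))); first ring.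
  by rewrite O00 O11 O12 O22 C00 C10 C11; ring.
have e00 : 4 * (1 - m00 - m11 + m22) - 2 * (m12 + m21)^+2 - 2 * (1 - m00 - m11 + m22)^+2 = 4 * (1 - m00 - m11 + m22) * m00.
  apply/eqP; rewrite -subr_eq0; apply/eqP.
  transitivity ((2)  *  (m00 * m00 + m10 * m10 + m20 * m20 - 1) + (- 2)  *  (m01 * m01 + m11 * m11 + m21 * m21 - 1) + (- 2)  *  (m02 * m02 + m12 * m12 + m22 * m22 - 1) + (- 4)  *  (m00 - (m11 * m22 - m12 * m21)) + (2 * m01)  *  (m01 + (m10 * m22 - m12 * m20)) + (2 * m02)  *  (m02 - (m10 * m21 - m11 * m20)) + (- 2 * m10)  *  (m10 + (m01 * m22 - m02 * m21)) + (- 2 * m20)  *  (m20 - (m01 * m12 - m02 * m11))); first ring.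
  by rewrite O00 O11 O22 C00 C01 C02 C10 C20; ring.
have e01 : 2 * ((m02 + m20) * (m12 + m21) - (1 - m00 - m11 + m22) * (m10 - m01)) = 4 * (1 - m00 - m11 + m22) * m01.
  apply/eqP; rewrite -subr_eq0; apply/eqP.
  transitivity ((2)  *  (m00 * m01 + m10 * m11 + m20 * m21) + (2 * m10)  *  (m00 - (m11 * m22 - m12 * m21)) + (- 2 + 2 * m11)  *  (m01 + (m10 * m22 - m12 * m20)) + (2 * m12)  *  (m02 - (m10 * m21 - m11 * m20)) + (- 2)  *  (m10 + (m01 * m22 - m02 * m21))); first ring.
  by rewrite O01 C00 C01 C02 C10; ring.
have e02 : 2 * ((m02 + m20) * (1 - m00 - m11 + m22) + (m12 + m21) * (m10 - m01)) = 4 * (1 - m00 - m11 + m22) * m02.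
  apply/eqP; rewrite -subr_eq0; apply/eqP.
  transitivity ((2 + 2 * m22)  *  (m00 * m02 + m10 * m12 + m20 * m22) + (- 2 * m20)  *  (m02 * m02 + m12 * m12 + m22 * m22 - 1) + (- 2 * m20)  *  (m00 - (m11 * m22 - m12 * m21)) + (- 2 * m21 - 2 * m12)  *  (m01 + (m10 * m22 - m12 * m20)) + (- 2 - 2 * m22)  *  (m02 - (m10 * m21 - m11 * m20)) + (2 * m02)  *  (m11 - (m00 * m22 - m02 * m20))); first ring.
  by rewrite O02 O22 C00 C01 C02 C11; ring.
have e10 : 2 * ((m02 + m20) * (m12 + m21) + (1 - m00 - m11 + m22) * (m10 - m01)) = 4 * (1 - m00 - m11 + m22) * m10.
  apply/eqP; rewrite -subr_eq0; apply/eqP.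
  transitivity ((2)  *  (m00 * m01 + m10 * m11 + m20 * m21) + (2 * m10)  *  (m00 - (m11 * m22 - m12 * m21)) + (- 2 + 2 * m11)  *  (m01 + (m10 * m22 - m12 * m20)) + (2 * m12)  *  (m02 - (m10 * m21 - m11 * m20)) + (- 2)  *  (m10 + (m01 * m22 - m02 * m21))); first ring.
  by rewrite O01 C00 C01 C02 C10; ring.
have e11 : 4 * (1 - m00 - m11 + m22) - 2 * (m02 + m20)^+2 - 2 * (1 - m00 - m11 + m22)^+2 = 4 * (1 - m00 - m11 + m22) * m11.
  apply/eqP; rewrite -subr_eq0; apply/eqP.
  transitivity ((- 2)  *  (m02 * m02 + m12 * m12 + m22 * m22 - 1) + (- 2 * m00)  *  (m00 - (m11 * m22 - m12 * m21)) + (- 4 + 2 * m11)  *  (m11 - (m00 * m22 - m02 * m20)) + (2 * m12)  *  (m12 + (m00 * m21 - m01 * m20)) + (- 2 * m20)  *  (m20 - (m01 * m12 - m02 * m11))); first ring.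
  by rewrite O22 C00 C11 C12 C20; ring.
have e12 : 2 * ((m12 + m21) * (1 - m00 - m11 + m22) - (m02 + m20) * (m10 - m01)) = 4 * (1 - m00 - m11 + m22) * m12.
  apply/eqP; rewrite -subr_eq0; apply/eqP.
  transitivity ((2 + 2 * m22)  *  (m01 * m02 + m11 * m12 + m21 * m22) + (- 2 * m21)  *  (m02 * m02 + m12 * m12 + m22 * m22 - 1) + (2 * m12)  *  (m00 - (m11 * m22 - m12 * m21)) + (- 2 * m20 - 2 * m02)  *  (m10 + (m01 * m22 - m02 * m21)) + (- 2 * m21)  *  (m11 - (m00 * m22 - m02 * m20)) + (- 2 - 2 * m22)  *  (m12 + (m00 * m21 - m01 * m20))); first ring.
  by rewrite O12 O22 C00 C10 C11 C12; ring.
have e20 : 2 * ((m02 + m20) * (1 - m00 - m11 + m22) - (m12 + m21) * (m10 - m01)) = 4 * (1 - m00 - m11 + m22) * m20.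
  apply/eqP; rewrite -subr_eq0; apply/eqP.
  transitivity ((- 2 - 2 * m22)  *  (m00 * m02 + m10 * m12 + m20 * m22) + (2 * m20)  *  (m02 * m02 + m12 * m12 + m22 * m22 - 1) + (2 * m20)  *  (m00 - (m11 * m22 - m12 * m21)) + (2 * m21 + 2 * m12)  *  (m01 + (m10 * m22 - m12 * m20)) + (2 + 2 * m22)  *  (m02 - (m10 * m21 - m11 * m20)) + (- 2 * m02)  *  (m11 - (m00 * m22 - m02 * m20))); first ring.
  by rewrite O02 O22 C00 C01 C02 C11; ring.
have e21 : 2 * ((m12 + m21) * (1 - m00 - m11 + m22) + (m02 + m20) * (m10 - m01)) = 4 * (1 - m00 - m11 + m22) * m21.
  apply/eqP; rewrite -subr_eq0; apply/eqP.
  transitivity ((- 2 - 2 * m22)  *  (m01 * m02 + m11 * m12 + m21 * m22) + (2 * m21)  *  (m02 * m02 + m12 * m12 + m22 * m22 - 1) + (- 2 * m12)  *  (m00 - (m11 * m22 - m12 * m21)) + (2 * m20 + 2 * m02)  *  (m10 + (m01 * m22 - m02 * m21)) + (2 * m21)  *  (m11 - (m00 * m22 - m02 * m20)) + (2 + 2 * m22)  *  (m12 + (m00 * m21 - m01 * m20))); first ring.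
  by rewrite O12 O22 C00 C10 C11 C12; ring.
have e22 : 4 * (1 - m00 - m11 + m22) - 2 * (m02 + m20)^+2 - 2 * (m12 + m21)^+2 = 4 * (1 - m00 - m11 + m22) * m22.
  apply/eqP; rewrite -subr_eq0; apply/eqP.
  transitivity ((2)  *  (m00 * m00 + m10 * m10 + m20 * m20 - 1) + (- 2)  *  (m01 * m01 + m11 * m11 + m21 * m21 - 1) + (- 4)  *  (m02 * m02 + m12 * m12 + m22 * m22 - 1) + (- 4 - 2 * m00)  *  (m00 - (m11 * m22 - m12 * m21)) + (2 * m01)  *  (m01 + (m10 * m22 - m12 * m20)) + (2 * m02)  *  (m02 - (m10 * m21 - m11 * m20)) + (- 2 * m10)  *  (m10 + (m01 * m22 - m02 * m21)) + (- 4 + 2 * m11)  *  (m11 - (m00 * m22 - m02 * m20)) + (2 * m12)  *  (m12 + (m00 * m21 - m01 * m20)) + (- 4 * m20)  *  (m20 - (m01 * m12 - m02 * m11))); first ring.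
  by rewrite O00 O11 O22 C00 C01 C02 C10 C11 C12 C20; ring.
have hk0 : 0 < (1 - m00 - m11 + m22) by apply: lt_le_trans hk; exact: ltr01.
exact: (RQ_mkq hn hk0 e00 e01 e02 e10 e11 e12 e20 e21 e22).
Qed.

Definition ent {R : Type} {n : nat} (M : 'M[R]_n.+1) (i j : nat) := M (inord i) (inord j).
Arguments ent : simpl never.
Lemma entE (R : Type) n (M : 'M[R]_n.+1) (i j : 'I_n.+1) : M i j = ent M i j.
Proof. by rewrite /ent !inord_val. Qed.

Lemma det2 (R : comRingType) (A : 'M[R]_2) : \det A = ent A 0 0 * ent A 1 1 - ent A 0 1 * ent A 1 0.
Proof.
rewrite (expand_det_row _ ord0) !big_ord_recr big_ord0 /= /cofactor !det_mx11 /= !mxE /=.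
rewrite !entE /=. ring.
Qed.

Lemma adjE (R : comRingType) (M : 'M[R]_3) : M^T *m M = 1%:M -> \det M = 1 -> \adj M = M^T.
Proof.
move=> h1 h2.
have := mul_mx_adj M; rewrite h2 => h3.
by rewrite -[\adj M]mul1mx -h1 -mulmxA h3 mulmx1.
Qed.

Definition o0 : 'I_3 := @Ordinal 3 0 isT.
Definition o1 : 'I_3 := @Ordinal 3 1 isT.
Definition o2 : 'I_3 := @Ordinal 3 2 isT.

Lemma so3_rels (R : realType) (M : 'M[R]_3) : SO3 M ->
  (ent M 0 0 * ent M 0 0 + ent M 1 0 * ent M 1 0 + ent M 2 0 * ent M 2 0 - 1 = 0) /\
  (ent M 0 0 * ent M 0 1 + ent M 1 0 * ent M 1 1 + ent M 2 0 * ent M 2 1 = 0) /\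
  (ent M 0 0 * ent M 0 2 + ent M 1 0 * ent M 1 2 + ent M 2 0 * ent M 2 2 = 0) /\
  (ent M 0 1 * ent M 0 1 + ent M 1 1 * ent M 1 1 + ent M 2 1 * ent M 2 1 - 1 = 0) /\
  (ent M 0 1 * ent M 0 2 + ent M 1 1 * ent M 1 2 + ent M 2 1 * ent M 2 2 = 0) /\
  (ent M 0 2 * ent M 0 2 + ent M 1 2 * ent M 1 2 + ent M 2 2 * ent M 2 2 - 1 = 0) /\
  (ent M 0 0 - (ent M 1 1 * ent M 2 2 - ent M 1 2 * ent M 2 1) = 0) /\
  (ent M 0 1 + (ent M 1 0 * ent M 2 2 - ent M 1 2 * ent M 2 0) = 0) /\
  (ent M 0 2 - (ent M 1 0 * ent M 2 1 - ent M 1 1 * ent M 2 0) = 0) /\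
  (ent M 1 0 + (ent M 0 1 * ent M 2 2 - ent M 0 2 * ent M 2 1) = 0) /\
  (ent M 1 1 - (ent M 0 0 * ent M 2 2 - ent M 0 2 * ent M 2 0) = 0) /\
  (ent M 1 2 + (ent M 0 0 * ent M 2 1 - ent M 0 1 * ent M 2 0) = 0) /\
  (ent M 2 0 - (ent M 0 1 * ent M 1 2 - ent M 0 2 * ent M 1 1) = 0) /\
  (ent M 2 1 + (ent M 0 0 * ent M 1 2 - ent M 0 2 * ent M 1 0) = 0) /\
  (ent M 2 2 - (ent M 0 0 * ent M 1 1 - ent M 0 1 * ent M 1 0) = 0).
Proof.
case=> h1 h2; have hA := adjE _ _ h1 h2.
have := congr1 (fun A : 'M[R]_3 => A o0 o0) h1; rewrite !mxE !big_ord_recr big_ord0 /= !mxE !entE /= ?inordK //= ?add0r => h.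
have O00 : ent M 0 0 * ent M 0 0 + ent M 1 0 * ent M 1 0 + ent M 2 0 * ent M 2 0 - 1 = 0 by rewrite h subrr.
clear h.
have := congr1 (fun A : 'M[R]_3 => A o0 o1) h1; rewrite !mxE !big_ord_recr big_ord0 /= !mxE !entE /= ?inordK //= ?add0r => h.
have O01 : ent M 0 0 * ent M 0 1 + ent M 1 0 * ent M 1 1 + ent M 2 0 * ent M 2 1 = 0 by exact: h.
clear h.
have := congr1 (fun A : 'M[R]_3 => A o0 o2) h1; rewrite !mxE !big_ord_recr big_ord0 /= !mxE !entE /= ?inordK //= ?add0r => h.
have O02 : ent M 0 0 * ent M 0 2 + ent M 1 0 * ent M 1 2 + ent M 2 0 * ent M 2 2 = 0 by exact: h.
clear h.
have := congr1 (fun A : 'M[R]_3 => A o1 o1) h1; rewrite !mxE !big_ord_recr big_ord0 /= !mxE !entE /= ?inordK //= ?add0r => h.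
have O11 : ent M 0 1 * ent M 0 1 + ent M 1 1 * ent M 1 1 + ent M 2 1 * ent M 2 1 - 1 = 0 by rewrite h subrr.
clear h.
have := congr1 (fun A : 'M[R]_3 => A o1 o2) h1; rewrite !mxE !big_ord_recr big_ord0 /= !mxE !entE /= ?inordK //= ?add0r => h.
have O12 : ent M 0 1 * ent M 0 2 + ent M 1 1 * ent M 1 2 + ent M 2 1 * ent M 2 2 = 0 by exact: h.
clear h.
have := congr1 (fun A : 'M[R]_3 => A o2 o2) h1; rewrite !mxE !big_ord_recr big_ord0 /= !mxE !entE /= ?inordK //= ?add0r => h.
have O22 : ent M 0 2 * ent M 0 2 + ent M 1 2 * ent M 1 2 + ent M 2 2 * ent M 2 2 - 1 = 0 by rewrite h subrr.
clear h.
have := congr1 (fun A : 'M[R]_3 => A o0 o0) hA; rewrite !mxE /cofactor det2 /ent !mxE -/ent !entE /bump /= ?inordK //= /bump /= => h.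
have C00 : ent M 0 0 - (ent M 1 1 * ent M 2 2 - ent M 1 2 * ent M 2 1) = 0 by rewrite -h; ring.
clear h.
have := congr1 (fun A : 'M[R]_3 => A o1 o0) hA; rewrite !mxE /cofactor det2 /ent !mxE -/ent !entE /bump /= ?inordK //= /bump /= => h.
have C01 : ent M 0 1 + (ent M 1 0 * ent M 2 2 - ent M 1 2 * ent M 2 0) = 0 by rewrite -h; ring.
clear h.
have := congr1 (fun A : 'M[R]_3 => A o2 o0) hA; rewrite !mxE /cofactor det2 /ent !mxE -/ent !entE /bump /= ?inordK //= /bump /= => h.
have C02 : ent M 0 2 - (ent M 1 0 * ent M 2 1 - ent M 1 1 * ent M 2 0) = 0 by rewrite -h; ring.
clear h.
have := congr1 (fun A : 'M[R]_3 => A o0 o1) hA; rewrite !mxE /cofactor det2 /ent !mxE -/ent !entE /bump /= ?inordK //= /bump /= => h.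
have C10 : ent M 1 0 + (ent M 0 1 * ent M 2 2 - ent M 0 2 * ent M 2 1) = 0 by rewrite -h; ring.
clear h.
have := congr1 (fun A : 'M[R]_3 => A o1 o1) hA; rewrite !mxE /cofactor det2 /ent !mxE -/ent !entE /bump /= ?inordK //= /bump /= => h.
have C11 : ent M 1 1 - (ent M 0 0 * ent M 2 2 - ent M 0 2 * ent M 2 0) = 0 by rewrite -h; ring.
clear h.
have := congr1 (fun A : 'M[R]_3 => A o2 o1) hA; rewrite !mxE /cofactor det2 /ent !mxE -/ent !entE /bump /= ?inordK //= /bump /= => h.
have C12 : ent M 1 2 + (ent M 0 0 * ent M 2 1 - ent M 0 1 * ent M 2 0) = 0 by rewrite -h; ring.
clear h.
have := congr1 (fun A : 'M[R]_3 => A o0 o2) hA; rewrite !mxE /cofactor det2 /ent !mxE -/ent !entE /bump /= ?inordK //= /bump /= => h.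
have C20 : ent M 2 0 - (ent M 0 1 * ent M 1 2 - ent M 0 2 * ent M 1 1) = 0 by rewrite -h; ring.
clear h.
have := congr1 (fun A : 'M[R]_3 => A o1 o2) hA; rewrite !mxE /cofactor det2 /ent !mxE -/ent !entE /bump /= ?inordK //= /bump /= => h.
have C21 : ent M 2 1 + (ent M 0 0 * ent M 1 2 - ent M 0 2 * ent M 1 0) = 0 by rewrite -h; ring.
clear h.
have := congr1 (fun A : 'M[R]_3 => A o2 o2) hA; rewrite !mxE /cofactor det2 /ent !mxE -/ent !entE /bump /= ?inordK //= /bump /= => h.
have C22 : ent M 2 2 - (ent M 0 0 * ent M 1 1 - ent M 0 1 * ent M 1 0) = 0 by rewrite -h; ring.
clear h.
by do !split.
Qed.
Section C.
Variable R : realType.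
Definition rk (k : nat) : 'rV[R]_4 := \row_(j < 4) (j == k :> nat)%:R.
Lemma rowE (a b c d : R) : \row_(j < 4) nth 0 [:: a; b; c; d] j =
  a *: rk 0 + b *: rk 1 + c *: rk 2 + d *: rk 3.
Proof.
apply/rowP => j; rewrite !mxE.
case: j => [[|[|[|[|//]]]] ?] /=.
all: ring.
Qed.

Lemma mkq_cont (T : topologicalType) (A B C D : T -> R) x :
  {for x, continuous A} -> {for x, continuous B} ->
  {for x, continuous C} -> {for x, continuous D} ->
  0 < A x ^+2 + B x ^+2 + C x ^+2 + D x ^+2 ->
  {for x, continuous (fun y => mkq (A y) (B y) (C y) (D y))}.
Proof.
move=> cA cB cC cD hp.
rewrite /mkq.
have -> : (fun y => (Num.sqrt (A y ^+ 2 + B y ^+ 2 + C y ^+ 2 + D y ^+ 2))^-1 *: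
     \row_(j < 4) nth 0 [:: A y; B y; C y; D y] j) =
   (fun y => (Num.sqrt (A y ^+ 2 + B y ^+ 2 + C y ^+ 2 + D y ^+ 2))^-1 *:
     (A y *: rk 0 + B y *: rk 1 + C y *: rk 2 + D y *: rk 3)).
  by apply: funext => y; rewrite rowE.
have cS : forall F : T -> R, {for x, continuous F} -> {for x, continuous (fun y => F y ^+ 2)}.
  move=> F cF; have -> : (fun y => F y ^+ 2) = (F \* F) by apply: funext => y; rewrite /= expr2.
  exact: continuousM.
apply: continuousZ.
  apply: continuousV.
    by rewrite sqrtr_eq0 -ltNge.
  apply: continuous_comp; last exact: sqrt_continuous.
  by repeat apply: continuousD; apply: cS.
repeat apply: continuousD; apply: continuousZr_tmp => //.
Qed.

Lemma ent_cont i j : continuous (fun M : 'M[R]_3 => ent M i j).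
Proof. by move=> M; exact: coord_continuous. Qed.

Lemma max_cont (T : topologicalType) (A : T -> R) x : {for x, continuous A} ->
  {for x, continuous (fun y => Num.max (A y) 1)}.
Proof. move=> cA; apply: (continuous_max cA); exact: cst_continuous. Qed.
End C.

Arguments branch_w {R m00 m01 m02 m10 m11 m12 m20 m21 m22}.
Arguments branch_x {R m00 m01 m02 m10 m11 m12 m20 m21 m22}.
Arguments branch_y {R m00 m01 m02 m10 m11 m12 m20 m21 m22}.
Arguments branch_z {R m00 m01 m02 m10 m11 m12 m20 m21 m22}.

Section Fin.
Variable R : realType.
Implicit Types M : 'M[R]_3.

Definition fw M := mkq (Num.max (1 + ent M 0 0 + ent M 1 1 + ent M 2 2) 1)
  (ent M 2 1 - ent M 1 2) (ent M 0 2 - ent M 2 0) (ent M 1 0 - ent M 0 1).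
Definition fx M := mkq (ent M 2 1 - ent M 1 2)
  (Num.max (1 + ent M 0 0 - ent M 1 1 - ent M 2 2) 1)
  (ent M 0 1 + ent M 1 0) (ent M 0 2 + ent M 2 0).
Definition fy M := mkq (ent M 0 2 - ent M 2 0) (ent M 0 1 + ent M 1 0)
  (Num.max (1 - ent M 0 0 + ent M 1 1 - ent M 2 2) 1)
  (ent M 1 2 + ent M 2 1).
Definition fz M := mkq (ent M 1 0 - ent M 0 1) (ent M 0 2 + ent M 2 0)
  (ent M 1 2 + ent M 2 1)
  (Num.max (1 - ent M 0 0 - ent M 1 1 + ent M 2 2) 1).

Lemma mat9_ent M : mat9 (ent M 0 0) (ent M 0 1) (ent M 0 2) (ent M 1 0) (ent M 1 1)
  (ent M 1 2) (ent M 2 0) (ent M 2 1) (ent M 2 2) = M.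
Proof.
apply/matrixP => i j; rewrite mxE.
by case: i => [[|[|[|//]]] ?]; case: j => [[|[|[|//]]] ?]; rewrite entE.
Qed.

Lemma sq1 (a : R) : 1 <= a -> 1 <= a^+2.
Proof. move=> h; rewrite expr2; nra. Qed.
Lemma posa (a b c d : R) : 1 <= a -> 0 < a^+2 + b^+2 + c^+2 + d^+2.
Proof. move=> /sq1 h; have := sqr_ge0 b; have := sqr_ge0 c; have := sqr_ge0 d; lra. Qed.
Lemma posb (a b c d : R) : 1 <= b -> 0 < a^+2 + b^+2 + c^+2 + d^+2.
Proof. move=> /sq1 h; have := sqr_ge0 a; have := sqr_ge0 c; have := sqr_ge0 d; lra. Qed.
Lemma posc (a b c d : R) : 1 <= c -> 0 < a^+2 + b^+2 + c^+2 + d^+2.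
Proof. move=> /sq1 h; have := sqr_ge0 b; have := sqr_ge0 a; have := sqr_ge0 d; lra. Qed.
Lemma posd (a b c d : R) : 1 <= d -> 0 < a^+2 + b^+2 + c^+2 + d^+2.
Proof. move=> /sq1 h; have := sqr_ge0 b; have := sqr_ge0 c; have := sqr_ge0 a; lra. Qed.

Lemma max1 (x : R) : 1 <= Num.max x 1.
Proof. by rewrite le_max lexx orbT. Qed.

Lemma maxl1 (x : R) : 1 <= x -> Num.max x 1 = x.
Proof. by move=> h; rewrite max_l. Qed.




End Fin.

Ltac lincont := repeat (apply: continuousD || apply: continuousB || apply: continuousN || apply: max_cont || exact: ent_cont || exact: cst_continuous).

Theorem theorem6 (R : realType) :
  exists f1 f2 f3 f4 : 'M[R]_3 -> 'rV[R]_4,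
    [/\ {within (@SO3 R), continuous f1}, {within (@SO3 R), continuous f2},
        {within (@SO3 R), continuous f3} & {within (@SO3 R), continuous f4}] /\
    (forall M, (@SO3 R) M -> [/\ S3 (f1 M), S3 (f2 M), S3 (f3 M) & S3 (f4 M)]) /\
    (forall M, (@SO3 R) M ->
       RQ (f1 M) = M \/ RQ (f2 M) = M \/ RQ (f3 M) = M \/ RQ (f4 M) = M).
Proof.
exists (@fw R), (@fx R), (@fy R), (@fz R); split; [|split].
- split; apply: continuous_subspaceT => M.
  + apply: (@mkq_cont R _ (fun M0 : 'M[R]_3 => Num.max (1 + ent M0 0 0 + ent M0 1 1 + ent M0 2 2) 1) (fun M0 : 'M[R]_3 => ent M0 2 1 - ent M0 1 2) (fun M0 : 'M[R]_3 => ent M0 0 2 - ent M0 2 0) (fun M0 : 'M[R]_3 => ent M0 1 0 - ent M0 0 1) M); [by lincont|by lincont|by lincont|by lincont|apply: posa; exact: max1].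
  + apply: (@mkq_cont R _ (fun M0 : 'M[R]_3 => ent M0 2 1 - ent M0 1 2) (fun M0 : 'M[R]_3 => Num.max (1 + ent M0 0 0 - ent M0 1 1 - ent M0 2 2) 1) (fun M0 : 'M[R]_3 => ent M0 0 1 + ent M0 1 0) (fun M0 : 'M[R]_3 => ent M0 0 2 + ent M0 2 0) M); [by lincont|by lincont|by lincont|by lincont|apply: posb; exact: max1].
  + apply: (@mkq_cont R _ (fun M0 : 'M[R]_3 => ent M0 0 2 - ent M0 2 0) (fun M0 : 'M[R]_3 => ent M0 0 1 + ent M0 1 0) (fun M0 : 'M[R]_3 => Num.max (1 - ent M0 0 0 + ent M0 1 1 - ent M0 2 2) 1) (fun M0 : 'M[R]_3 => ent M0 1 2 + ent M0 2 1) M); [by lincont|by lincont|by lincont|by lincont|apply: posc; exact: max1].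
  + apply: (@mkq_cont R _ (fun M0 : 'M[R]_3 => ent M0 1 0 - ent M0 0 1) (fun M0 : 'M[R]_3 => ent M0 0 2 + ent M0 2 0) (fun M0 : 'M[R]_3 => ent M0 1 2 + ent M0 2 1) (fun M0 : 'M[R]_3 => Num.max (1 - ent M0 0 0 - ent M0 1 1 + ent M0 2 2) 1) M); [by lincont|by lincont|by lincont|by lincont|apply: posd; exact: max1].
- move=> M _; split; apply: mkq_S3.
  + apply: posa; exact: max1.
  + apply: posb; exact: max1.
  + apply: posc; exact: max1.
  + apply: posd; exact: max1.
- move=> M hM.
  move: (so3_rels R M hM) => [hO00 [hO01 [hO02 [hO11 [hO12 [hO22 [hC00 [hC01 [hC02 [hC10 [hC11 [hC12 [hC20 [hC21 hC22]]]]]]]]]]]]]].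
  have [hw|hw] := lerP 1 (1 + ent M 0 0 + ent M 1 1 + ent M 2 2).
    left; rewrite /fw maxl1 //.
    by rewrite (branch_w hO00 hO01 hO02 hO11 hO12 hO22 hC00 hC01 hC02 hC10 hC11 hC12 hC20 hC21 hC22 hw) mat9_ent.
  have [hx|hx] := lerP 1 (1 + ent M 0 0 - ent M 1 1 - ent M 2 2).
    right; left; rewrite /fx maxl1 //.
    by rewrite (branch_x hO00 hO01 hO02 hO11 hO12 hO22 hC00 hC01 hC02 hC10 hC11 hC12 hC20 hC21 hC22 hx) mat9_ent.
  have [hy|hy] := lerP 1 (1 - ent M 0 0 + ent M 1 1 - ent M 2 2).
    right; right; left; rewrite /fy maxl1 //.
    by rewrite (branch_y hO00 hO01 hO02 hO11 hO12 hO22 hC00 hC01 hC02 hC10 hC11 hC12 hC20 hC21 hC22 hy) mat9_ent.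
  have [hz|hz] := lerP 1 (1 - ent M 0 0 - ent M 1 1 + ent M 2 2).
    right; right; right; rewrite /fz maxl1 //.
    by rewrite (branch_z hO00 hO01 hO02 hO11 hO12 hO22 hC00 hC01 hC02 hC10 hC11 hC12 hC20 hC21 hC22 hz) mat9_ent.
  exfalso; lra.
Qed.
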